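(* Let $(X,\mathcal{M})$ be a measurable space, $\Sigma$ a compact Hausdorff group with Haar probability measure $\mu_\Sigma$, and $T:\Sigma\times X\to X$ a measurable group action. Let $V\subset\mathcal{M}_b(X)$ be a separable reproducing kernel Hilbert space with reproducing kernel $k:X\times X\to\mathbb{R}$, and $\Gamma=\{\gamma\in V:\|\gamma\|_V\le1\}$. If $k$ is $\Sigma$-invariant, i.e. $k(T_\sigma(x),T_\sigma(y))=k(x,y)$ for all $\sigma\in\Sigma$, $x,y\in X$, then $S_\Sigma[\Gamma]\subset\Gamma$.
   Context: $S_\Sigma[\gamma](x)=\int_\Sigma\gamma(T_\sigma(x))\mu_\Sigma(d\sigma)$. *)

(* Defs.v *)
From HB Require Import structures.
From mathcomp Require Import all_boot all_order all_algebra.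
From mathcomp Require Import all_classical all_reals all_analysis.
Set Implicit Arguments. Unset Strict Implicit. Unset Printing Implicit Defensive.
Import Order.TTheory GRing.Theory Num.Theory.
Import numFieldNormedType.Exports.
Local Open Scope classical_set_scope.
Local Open Scope ring_scope.

Definition borel (S : ptopologicalType) := g_sigma_algebraType (@open S).

Definition compact_hausdorff_group (S : ptopologicalType)
    (mul : S -> S -> S) (inv : S -> S) (one : S) : Prop :=
  [/\ [/\ associative mul, left_id one mul & left_inverse one inv mul],
      continuous (fun p : S * S => mul p.1 p.2), continuous inv,
      compact [set: S] & hausdorff_space S].

Definition haar_probability (S : ptopologicalType) (R : realType)
    (mul : S -> S -> S) (mu : probability (borel S) R) : Prop :=
  [/\ (forall (s : S) (A : set (borel S)), measurable A ->
          mu [set mul s a | a in A] = mu A),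
      (forall A : set (borel S), measurable A ->
          mu A = ereal_inf [set mu U | U in [set U : set (borel S) |
                                     @open S U /\ A `<=` U]]) &
      (forall U : set (borel S), @open S U ->
          mu U = ereal_sup [set mu K | K in [set K : set (borel S) |
                                      @compact S K /\ K `<=` U]])].

Definition group_action (S X : Type) (mul : S -> S -> S) (one : S)
    (T : S * X -> X) : Prop :=
  (forall x, T (one, x) = x) /\
  (forall s t x, T (mul s t, x) = T (s, T (t, x))).

Definition ipnorm (R : realType) (F : Type) (ip : F -> F -> R) (f : F) : R :=
  Num.sqrt (ip f f).

Definition bounded_measurable d (X : measurableType d) (R : realType)
    (f : X -> R) : Prop :=
  measurable_fun [set: X] f /\ exists M : R, forall x, `|f x| <= M.

Definition separable_rkhs d (X : measurableType d) (R : realType)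
    (V : set (X -> R)) (ip : (X -> R) -> (X -> R) -> R)
    (k : X -> X -> R) : Prop :=
  [/\ [/\
      (forall f, V f -> bounded_measurable f),
      [/\ V (fun _ => 0),
          (forall f g, V f -> V g -> V (f \+ g)) &
          (forall (a : R) f, V f -> V (fun x => a * f x))] &
      [/\ (forall f g, V f -> V g -> ip f g = ip g f),
          (forall f g h, V f -> V g -> V h -> ip (f \+ g) h = ip f h + ip g h),
          (forall (a : R) f g, V f -> V g -> ip (fun x => a * f x) g = a * ip f g),
          (forall f, V f -> 0 <= ip f f) &
          (forall f, V f -> ip f f = 0 -> f = (fun _ => 0))]],
      (forall u : nat -> X -> R, (forall n, V (u n)) ->
         (forall e : R, 0 < e -> exists N, forall m n, (N <= m)%N -> (N <= n)%N ->
             ipnorm ip (u m \- u n) < e) ->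
         exists2 f, V f &
           (fun n => ipnorm ip (u n \- f)) @ \oo --> (0 : R)),
      (exists D : set (X -> R), [/\ countable D, D `<=` V &
         forall f, V f -> forall e : R, 0 < e ->
           exists2 g, D g & ipnorm ip (f \- g) < e]) &
      (forall x, V (k x) /\ forall f, V f -> ip f (k x) = f x)].

Definition symmetrize (S : ptopologicalType) d (X : measurableType d)
    (R : realType) (mu : probability (borel S) R)
    (T : borel S * X -> X) (gamma : X -> R) : X -> R :=
  fun x => Rintegral mu [set: borel S] (fun s => gamma (T (s, x))).

(* Main.v *)
Require Import Defs.
From HB Require Import structures.
From mathcomp Require Import all_boot all_order all_algebra.
From mathcomp Require Import all_classical all_reals all_analysis.
From mathcomp Require Import ring lra.
Import Order.TTheory GRing.Theory Num.Theory.
Import numFieldNormedType.Exports.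
Local Open Scope classical_set_scope.
Local Open Scope ring_scope.
Set Implicit Arguments. Unset Strict Implicit.

Section RK.
Variables (R : realType) (X : Type) (V : set (X -> R)) (ip : (X -> R) -> (X -> R) -> R) (k : X -> X -> R).
Hypothesis HD : forall f g, V f -> V g -> V (f \+ g).
Hypothesis HZ : forall (a : R) f, V f -> V (fun x => a * f x).
Hypothesis H0 : V (fun _ => 0).
Hypothesis Hsym : forall f g, V f -> V g -> ip f g = ip g f.
Hypothesis HipD : forall f g h, V f -> V g -> V h -> ip (f \+ g) h = ip f h + ip g h.
Hypothesis HipZ : forall (a : R) f g, V f -> V g -> ip (fun x => a * f x) g = a * ip f g.
Hypothesis Hpos : forall f, V f -> 0 <= ip f f.
Hypothesis Hdef : forall f, V f -> ip f f = 0 -> f = (fun _ => 0).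
Hypothesis Hrep : forall x, V (k x) /\ forall f, V f -> ip f (k x) = f x.

Definition lin (a : R) (f : X -> R) (b : R) (g : X -> R) := fun x => a * f x + b * g x.

Lemma V_lin a f b g : V f -> V g -> V (lin a f b g).
Proof. by move=> Vf Vg; exact: (HD (HZ a Vf) (HZ b Vg)). Qed.

Lemma ip_lin1 a f b g h : V f -> V g -> V h -> ip (lin a f b g) h = a * ip f h + b * ip g h.
Proof.
move=> Vf Vg Vh.
by rewrite (HipD (HZ a Vf) (HZ b Vg) Vh) (HipZ a Vf Vh) (HipZ b Vg Vh).
Qed.

Lemma ip_lin2 a f b g h : V f -> V g -> V h -> ip h (lin a f b g) = a * ip h f + b * ip h g.
Proof.
move=> Vf Vg Vh; rewrite Hsym ?ip_lin1 ?(Hsym Vf) ?(Hsym Vg) //; exact: V_lin.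
Qed.

Lemma ip_linlin a f b g c e : V f -> V g ->
  ip (lin a f b g) (lin c f e g) = a*c*ip f f + (a*e + b*c)*ip f g + b*e*ip g g.
Proof.
move=> Vf Vg; rewrite ip_lin1 ?V_lin //.
  by rewrite (ip_lin2 c e Vf Vg Vf) (ip_lin2 c e Vf Vg Vg) (Hsym Vg Vf); ring.
exact: V_lin.
Qed.

Lemma ip0l h : V h -> ip (fun _ => 0) h = 0.
Proof.
move=> Vh; have := HipZ 0 Vh Vh; rewrite mul0r.
by have -> : (fun x => 0 * h x) = (fun _ : X => 0 : R) by apply: funext => x; rewrite mul0r.
Qed.

Lemma ip0r h : V h -> ip h (fun _ => 0) = 0.
Proof. by move=> Vh; rewrite Hsym // ip0l. Qed.

Lemma CS f g : V f -> V g -> `|ip f g| <= ipnorm ip f * ipnorm ip g.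
Proof.
move=> Vf Vg; rewrite /ipnorm.
have [gg0|gg0] := eqVneq (ip g g) 0.
  rewrite (Hdef Vg gg0) ip0r // normr0; exact: mulr_ge0 (sqrtr_ge0 _) (sqrtr_ge0 _).
have ggp : 0 < ip g g by rewrite lt_neqAle eq_sym gg0 Hpos.
set t := - ip f g / ip g g.
have := Hpos (V_lin 1 t Vf Vg); rewrite ip_linlin //.
move=> H.
have H2 : ip f g ^+ 2 <= ip f f * ip g g.
  have : 0 <= ip g g * (1 * 1 * ip f f + (1 * t + t * 1) * ip f g + t * t * ip g g).
    exact: mulr_ge0 (ltW ggp) H.
  have -> : ip g g * (1 * 1 * ip f f + (1 * t + t * 1) * ip f g + t * t * ip g g)
     = ip f f * ip g g - ip f g ^+ 2 by rewrite /t; field; rewrite gg0.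
  by rewrite subr_ge0.
rewrite -sqrtrM ?Hpos // -sqrtr_sqr; exact: ler_wsqrtr.
Qed.

Lemma ipnorm_ge0 f : 0 <= ipnorm ip f.
Proof. exact: sqrtr_ge0. Qed.

Lemma ipnorm_sqr f : V f -> ipnorm ip f ^+ 2 = ip f f.
Proof. by move=> Vf; rewrite /ipnorm sqr_sqrtr ?Hpos. Qed.

Lemma sq_le (a b : R) : 0 <= b -> a ^+ 2 <= b ^+ 2 -> a <= b.
Proof. move=> b0 H; nra. Qed.

Lemma sq_lt (a b : R) : 0 <= a -> a ^+ 2 < b ^+ 2 -> 0 <= b -> a < b.
Proof. move=> a0 H b0; nra. Qed.

Lemma tri f g : V f -> V g -> ipnorm ip (lin 1 f 1 g) <= ipnorm ip f + ipnorm ip g.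
Proof.
move=> Vf Vg; apply: sq_le; first by rewrite addr_ge0 ?ipnorm_ge0.
rewrite ipnorm_sqr; last exact: V_lin.
rewrite (ip_linlin 1 1 1 1 Vf Vg).
have := CS Vf Vg; rewrite -(ipnorm_sqr Vf) -(ipnorm_sqr Vg).
move: (ip f g) (ipnorm ip f) (ipnorm ip g) => c a b Hc.
have : c <= a * b by apply: le_trans (ler_norm _) Hc.
move=> ?; nra.
Qed.


Lemma le_eps (a b c : R) : 0 <= c -> (forall d, 0 < d -> a <= b + d * c) -> a <= b.
Proof.
move=> c0 H; rewrite leNgt; apply/negP => ab.
set d := (a - b) / (2 * (c + 1)).
have c1 : 2 * (c + 1) != 0 by rewrite mulf_neq0 // gt_eqF // ltr_wpDl.
have dE : d * (2 * (c + 1)) = a - b by rewrite /d divfK.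
have d0 : 0 < d by rewrite /d divr_gt0 // ?subr_gt0 // mulr_gt0 // ltr_wpDl.
have := H d d0; nra.
Qed.

Lemma zero_eps (a : R) : (forall d, 0 < d -> `|a| <= d) -> a = 0.
Proof.
move=> H; apply/eqP; rewrite -normr_le0; apply: (@le_eps _ _ 1) => // d d0.
by rewrite add0r mulr1; exact: H.
Qed.

Lemma small (d : R) : 0 < d -> exists N, forall n, (N <= n)%N -> n.+1%:R^-1 < d.
Proof. move=> d0; have [N _ HN] := near_infty_natSinv_lt (PosNum d0); by exists N => n /HN. Qed.

Definition comb (r : seq (R * X)) : X -> R := fun y => \sum_(p <- r) p.1 * k p.2 y.
Definition Lh (h : X -> R) (r : seq (R * X)) : R := \sum_(p <- r) p.1 * h p.2.
Definition sc (a : R) (r : seq (R * X)) := map (fun p => (a * p.1, p.2)) r.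
Definition cmb a r b s := sc a r ++ sc b s.

Lemma comb_nil : comb [::] = fun _ => 0.
Proof. by apply: funext => y; rewrite /comb big_nil. Qed.

Lemma comb_cons p r : comb (p :: r) = lin p.1 (k p.2) 1 (comb r).
Proof. by apply: funext => y; rewrite /comb /lin big_cons mul1r. Qed.

Lemma V_comb r : V (comb r).
Proof.
elim: r => [|p r IH]; first by rewrite comb_nil.
rewrite comb_cons; apply: V_lin => //; exact: (Hrep _).1.
Qed.

Lemma ip_comb f r : V f -> ip f (comb r) = Lh f r.
Proof.
move=> Vf; elim: r => [|p r IH]; first by rewrite comb_nil ip0r // /Lh big_nil.
rewrite comb_cons (ip_lin2 _ _ (Hrep _).1 (V_comb r) Vf) IH (Hrep _).2 //.
by rewrite /Lh big_cons mul1r mulrC.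
Qed.

Lemma comb_cmb a r b s : comb (cmb a r b s) = lin a (comb r) b (comb s).
Proof.
apply: funext => y; rewrite /comb /cmb /sc /lin big_cat !big_map /= !mulr_sumr.
by congr (_ + _); apply: eq_bigr => p _; rewrite mulrA.
Qed.

Lemma Lh_cmb h a r b s : Lh h (cmb a r b s) = a * Lh h r + b * Lh h s.
Proof.
rewrite /Lh /cmb /sc big_cat !big_map /= !mulr_sumr.
by congr (_ + _); apply: eq_bigr => p _; rewrite mulrA.
Qed.

Lemma comb1 x : comb [:: (1, x)] = k x.
Proof. by apply: funext => y; rewrite /comb big_seq1 mul1r. Qed.

Lemma Lh1 h x : Lh h [:: (1, x)] = h x.
Proof. by rewrite /Lh big_seq1 mul1r. Qed.

Lemma subE (g f : X -> R) : g \- f = lin 1 g (-1) f.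
Proof. by apply: funext => y; rewrite /lin /= mul1r mulN1r. Qed.


Lemma rkhs_char
  (Hcomp : forall u : nat -> X -> R, (forall n, V (u n)) ->
         (forall e : R, 0 < e -> exists N, forall m n, (N <= m)%N -> (N <= n)%N ->
             ipnorm ip (u m \- u n) < e) ->
         exists2 f, V f &
           (fun n => ipnorm ip (u n \- f)) @ \oo --> (0 : R))
  (h : X -> R) (C : R) :
  0 <= C -> (forall r, `|Lh h r| <= C * ipnorm ip (comb r)) -> V h /\ ipnorm ip h <= C.
Proof.
move=> C0 HL.
pose Q r := ip (comb r) (comb r) / 2 - Lh h r.
have Qlb r : - (C ^+ 2) / 2 <= Q r.
  have := HL r; have := ipnorm_sqr (V_comb r); have := ipnorm_ge0 (comb r).
  rewrite /Q; move: (ipnorm ip (comb r)) (ip (comb r) (comb r)) (Lh h r) => n N L n0 <- HL'.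
  have : L <= C * n by apply: le_trans (ler_norm _) HL'.
  move=> HL2; have := sqr_ge0 (n - C); have -> : (n - C) ^+ 2 = n ^+ 2 - 2 * (C * n) + C ^+ 2 by ring.
  lra.
pose E := [set Q r | r in [set: seq (R * X)]].
have hinf : has_inf E.
  split; first by exists (Q [::]); exists [::].
  by exists (- (C ^+ 2) / 2) => _ [r _ <-]; exact: Qlb.
pose m := inf E.
have Qm r : m <= Q r by apply: (ge_inf hinf.2); exists r.
have : forall n : nat, exists r, Q r < m + n.+1%:R^-1.
  move=> n; have hp : 0 < (n.+1%:R : R)^-1 by rewrite invr_gt0 ltr0Sn.
  have [_ [r _ <-] Hr] := inf_adherent hp hinf.
  by exists r.
move/choice => [rs Hrs].
pose u n := comb (rs n).
have Vu n : V (u n) by exact: V_comb.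
have cau n n' : ip (lin 1 (u n) (-1) (u n')) (lin 1 (u n) (-1) (u n'))
      <= 4 * (n.+1%:R^-1 + n'.+1%:R^-1).
  have := Qm (cmb (1/2) (rs n) (1/2) (rs n')).
  rewrite /Q comb_cmb Lh_cmb (ip_linlin _ _ _ _ (Vu n) (Vu n')).
  rewrite (ip_linlin _ _ _ _ (Vu n) (Vu n')).
  have := Hrs n; have := Hrs n'; rewrite /Q -/(u n) -/(u n').
  move: (n.+1%:R^-1) (n'.+1%:R^-1) => a b.
  lra.
have [f Vf Hf] : exists2 f, V f & (fun n => ipnorm ip (u n \- f)) @ \oo --> (0:R).
  apply: Hcomp => // e e0.
  set e2 := e ^+ 2.
  have e20 : 0 < e2 by rewrite exprn_gt0.
  have [N HN] := small (divr_gt0 e20 (ltr0Sn R 7)).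
  exists N => a b Ha Hb; apply: sq_lt; [exact: ipnorm_ge0| |exact: ltW].
  rewrite subE ipnorm_sqr; last exact: V_lin.
  apply: le_lt_trans (cau a b) _.
  have := HN a Ha; have := HN b Hb; rewrite -/e2.
  move: (a.+1%:R^-1) (b.+1%:R^-1) => x y.
  lra.
have Hf' : forall d, 0 < d -> exists N, forall n, (N <= n)%N -> ipnorm ip (lin 1 (u n) (-1) f) < d.
  move=> d d0; have [N _ HN] := cvgr0_norm_lt _ Hf _ d0.
  exists N => n /HN; rewrite ger0_norm ?subE //; exact: ipnorm_ge0.
have Kp x : ip (k x) (k x) = k x x by apply: (Hrep x).2; exact: (Hrep x).1.
have K0 x : 0 <= k x x by rewrite -Kp; apply: Hpos; exact: (Hrep x).1.
have opt n x : (u n x - h x) ^+ 2 <= 2 * (k x x + 1) * n.+1%:R^-1.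
  have Vk := (Hrep x).1.
  set c := u n x - h x; set K := k x x; set ep := n.+1%:R^-1.
  have K1 : K + 1 != 0 by rewrite gt_eqF // ltr_wpDl // K0.
  set t := - c / (K + 1).
  have := Qm (cmb 1 (rs n) t [:: (1, x)]).
  rewrite /Q comb_cmb Lh_cmb comb1 Lh1 (ip_linlin _ _ _ _ (Vu n) Vk).
  rewrite Kp (Hrep x).2 // -/(u n).
  have := Hrs n; rewrite /Q -/(u n) -/ep.
  have -> : h x = u n x - c by rewrite /c; ring.
  move=> H1 H2.
  have H3 : 0 < t * c + t * t * K / 2 + ep.
    move: H1 H2; rewrite -/K; move: t (ip (u n) (u n)) (Lh h (rs n)) (u n x) => t' a b y.
    lra.
  have H4 : (K + 1) ^+ 2 * 2 * (t * c + t * t * K / 2 + ep) = - c ^+ 2 * (K + 2) + 2 * ep * (K + 1) ^+ 2.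
    by rewrite /t; field.
  have H5 : 0 < - c ^+ 2 * (K + 2) + 2 * ep * (K + 1) ^+ 2.
    rewrite -H4; apply: mulr_gt0 => //; apply: mulr_gt0 => //.
    by rewrite exprn_gt0 // ltr_wpDl // K0.
  have := K0 x; rewrite -/K => K0'.
  have := sqr_ge0 c.
  nra.
have fh : f = h.
  apply: funext => x; apply/eqP; rewrite -subr_eq0; apply/eqP; apply: zero_eps => d d0.
  have Vk := (Hrep x).1.
  set K := k x x; set sK := Num.sqrt K.
  have sK0 : 0 <= sK := sqrtr_ge0 _.
  have K0' : 0 <= K := K0 x.
  have sK1 : 0 < 2 * (sK + 1) by rewrite mulr_gt0 // ltr_wpDl.
  have K1 : 0 < 8 * (K + 1) by rewrite mulr_gt0 // ltr_wpDl.
  have [N1 HN1] := Hf' (d / (2 * (sK + 1))) (divr_gt0 d0 sK1).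
  have [N2 HN2] := small (divr_gt0 (exprn_gt0 2 d0) K1).
  pose n := maxn N1 N2.
  have h1 := HN1 n (leq_maxl _ _).
  have h2 := HN2 n (leq_maxr _ _).
  have h3 := opt n x.
  have e1 : `|f x - u n x| <= ipnorm ip (lin 1 (u n) (-1) f) * sK.
    have H := CS (V_lin 1 (-1) (Vu n) Vf) Vk.
    rewrite ip_lin1 // !(Hrep x).2 // in H.
    have -> : f x - u n x = -(1 * u n x + -1 * f x) by ring.
    have Ek : ipnorm ip (k x) = sK by rewrite /ipnorm Kp.
    by rewrite normrN; apply: le_trans H _; rewrite Ek.
  have e2 : `|u n x - h x| < d / 2.
    apply: sq_lt; [exact: normr_ge0| |by rewrite divr_ge0 // ltW].
    rewrite real_normK; last exact: num_real.
    apply: le_lt_trans h3 _.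
    have E8 : 2 * (K + 1) * (d ^+ 2 / (8 * (K + 1))) = (d / 2) ^+ 2.
      by field; rewrite gt_eqF // ltr_wpDl.
    rewrite -E8 ltr_pM2l //; last by rewrite mulr_gt0 // ltr_wpDl.
  set w := d / (2 * (sK + 1)).
  have wE : w * (2 * (sK + 1)) = d by rewrite /w divfK // gt_eqF.
  have w0 : 0 < w by rewrite divr_gt0.
  have e3 : ipnorm ip (lin 1 (u n) (-1) f) * sK <= w * sK by rewrite ler_wpM2r // ltW.
  have -> : f x - h x = (f x - u n x) + (u n x - h x) by ring.
  apply: le_trans (ler_normD _ _) _.
  nra.
split; first by rewrite -fh.
rewrite -fh.
set F := ipnorm ip f.
have F0 : 0 <= F := ipnorm_ge0 f.
suff : F ^+ 2 <= C * F by nra.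
apply: (@le_eps _ _ (C + F)) => [|d d0]; first by rewrite addr_ge0.
have [N HN] := Hf' d d0.
have hd := HN N (leqnn N).
set D := ipnorm ip (lin 1 (u N) (-1) f).
have D0 : 0 <= D := ipnorm_ge0 _.
have E1 : F ^+ 2 = ip f (u N) + ip f (lin 1 f (-1) (u N)).
  rewrite ipnorm_sqr // (ip_lin2 1 (-1) Vf (Vu N) Vf); ring.
have E2 : ip f (u N) <= C * (F + D).
  rewrite /u ip_comb // fh.
  apply: le_trans (ler_norm _) _; apply: le_trans (HL _) _.
  apply: (ler_wpM2l C0); rewrite -/(u N).
  have T := tri Vf (V_lin 1 (-1) (Vu N) Vf).
  have EQ : lin 1 f 1 (lin 1 (u N) (-1) f) = u N.
    by apply: funext => y; rewrite /lin; ring.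
  by rewrite EQ in T.
have E3 : ip f (lin 1 f (-1) (u N)) <= F * D.
  apply: le_trans (ler_norm _) _; apply: le_trans (CS Vf (V_lin 1 (-1) Vf (Vu N))) _.
  have -> : ipnorm ip (lin 1 f (-1) (u N)) = D.
    rewrite /D /ipnorm (ip_linlin _ _ _ _ Vf (Vu N)) (ip_linlin _ _ _ _ (Vu N) Vf).
    by rewrite (Hsym Vf (Vu N)); congr Num.sqrt; ring.
  by [].
have E4 : C * D <= C * d by rewrite ler_wpM2l // ltW.
have E5 : F * D <= F * d by rewrite ler_wpM2l // ltW.
lra.
Qed.

End RK.

Theorem lemma2 (R : realType) (d : measure_display) (X : measurableType d)
  (Sigma : ptopologicalType) (mul : Sigma -> Sigma -> Sigma)
  (inv : Sigma -> Sigma) (one : Sigma)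
  (mu : probability (borel Sigma) R)
  (T : borel Sigma * X -> X)
  (V : set (X -> R)) (ip : (X -> R) -> (X -> R) -> R) (k : X -> X -> R) :
  compact_hausdorff_group mul inv one ->
  haar_probability mul mu ->
  group_action mul one T ->
  measurable_fun [set: borel Sigma * X] T ->
  separable_rkhs V ip k ->
  (forall (s : Sigma) (x y : X), k (T (s, x)) (T (s, y)) = k x y) ->
  let Gamma := [set g : X -> R | V g /\ ipnorm ip g <= 1] in
  [set symmetrize mu T g | g in Gamma] `<=` Gamma.
Proof.
move=> _ _ _ HT [[Hbm [H0 HD HZ] [Hsym HipD HipZ Hpos Hdef]] Hcomp _ Hrep] Hinv Gamma.
move=> _ [g [Vg ng] <-].
set h := symmetrize mu T g.
have meas x : measurable_fun [set: borel Sigma] (fun s : borel Sigma => g (T (s, x))).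
  exact: measurableT_comp (Hbm g Vg).1 (measurable_fun_pair1 x HT).
have [M HM] := (Hbm g Vg).2.
have intg x : mu.-integrable [set: borel Sigma] (EFin \o (fun s => g (T (s, x)))).
  apply: measurable_bounded_integrable => //.
  - change (mu [set: borel Sigma] < +oo)%E; by rewrite probability_setT ltry.
  rewrite /bounded_near; near=> M0 => s _ /=; apply: le_trans (HM _) _.
  near: M0; apply: nbhs_pinfty_ge; exact: num_real.
have mT : measurable [set: borel Sigma] by [].
pose F r s := \sum_(p <- r) p.1 * g (T (s, p.2)).
have Fint r : mu.-integrable [set: borel Sigma] (EFin \o F r) /\
              Rintegral mu [set: borel Sigma] (F r) = Lh h r.
  elim: r => [|p r [IHi IHe]].
    have -> : F [::] = fun _ => 0 by apply: funext => s; rewrite /F big_nil.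
    rewrite /Lh big_nil; split; first exact: finite_measure_integrable_cst.
    by rewrite Rintegral_cst // mul0r.
  have -> : F (p :: r) = fun s => p.1 * g (T (s, p.2)) + F r s.
    by apply: funext => s; rewrite /F big_cons.
  have i1 : mu.-integrable [set: borel Sigma] (EFin \o (fun s => p.1 * g (T (s, p.2)))).
    exact: (integrableZl mT p.1 (intg p.2)).
  split; first exact: (integrableD mT i1 IHi).
  rewrite RintegralD // RintegralZl // /Lh big_cons -/(Lh h r) -IHe.
  by [].
have HL r : `|Lh h r| <= ipnorm ip g * ipnorm ip (comb k r).
  rewrite -(Fint r).2.
  set B := ipnorm ip g * ipnorm ip (comb k r).
  have FB s : `|F r s| <= B.
    pose rs := map (fun p => (p.1, T (s, p.2))) r.
    have e1 : F r s = ip g (comb k rs).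
      by rewrite (ip_comb HD HZ H0 Hsym HipD HipZ Hrep) // /Lh /rs big_map.
    have e2 : ip (comb k rs) (comb k rs) = ip (comb k r) (comb k r).
      have Vr := V_comb HD HZ H0 Hrep r; have Vrs := V_comb HD HZ H0 Hrep rs.
      rewrite (ip_comb HD HZ H0 Hsym HipD HipZ Hrep _ Vrs) (ip_comb HD HZ H0 Hsym HipD HipZ Hrep _ Vr).
      rewrite /Lh /rs big_map; apply: eq_bigr => p _ /=; congr (_ * _).
      by rewrite /comb big_map; apply: eq_bigr => q _ /=; rewrite Hinv.
    rewrite e1; apply: le_trans (CS HD HZ H0 Hsym HipD HipZ Hpos Hdef Vg (V_comb HD HZ H0 Hrep rs)) _.
    by rewrite /B /ipnorm e2.
  have cB : mu.-integrable [set: borel Sigma] (EFin \o cst B) by exact: finite_measure_integrable_cst.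
  have cNB : mu.-integrable [set: borel Sigma] (EFin \o cst (- B)) by exact: finite_measure_integrable_cst.
  have P1 : fine (mu [set: borel Sigma]) = 1 by rewrite probability_setT.
  rewrite ler_norml; apply/andP; split.
    have := @le_Rintegral _ _ _ mu _ (cst (- B)) (F r) mT cNB (Fint r).1.
    rewrite Rintegral_cst // P1 mulr1; apply => s _ /=.
    by have := FB s; rewrite ler_norml => /andP[].
  have := @le_Rintegral _ _ _ mu _ (F r) (cst B) mT (Fint r).1 cB.
  rewrite Rintegral_cst // P1 mulr1; apply => s _ /=.
  by have := FB s; rewrite ler_norml => /andP[].
have [Vh nh] := rkhs_char HD HZ H0 Hsym HipD HipZ Hpos Hdef Hrep Hcomp (ipnorm_ge0 ip g) HL.
split => //; exact: le_trans nh ng.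
Unshelve. all: by end_near.
Qed.
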